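(* For every connected graph $G$ with at least two vertices, there is a simple protocol solving multiparty equality on $G$ in the local broadcast model whose per-bit cost is at most $2\cdot\frac{\gamma(G)}{\gamma_f(G)}\cdot \mathrm{opt}(G)$.
   Context: Multiparty equality in the local broadcast model: every vertex $v$ of a connected graph $G$ receives an input $\lambda(v)\in\{0,1\}^k$. Vertices communicate by broadcasting messages, received by all neighbours and counted once. Protocols are deterministic and static: which vertices send and message lengths depend only on $G$ and $k$, contents may depend on inputs. At the end every vertex accepts or rejects; the protocol solves the problem if all vertices accept when all inputs are equal and at least one rejects when two inputs differ. Total cost = sum of the numbers of bits broadcast; $\mathrm{opt}(G,k)$ is the minimum total cost of a solving protocol and $\mathrm{opt}(G)=\lim_{k\to\infty}\mathrm{opt}(G,k)/k$. A simple protocol: each vertex of a fixed set $S$ broadcasts its whole input, others are silent, and each vertex accepts iff all inputs it received equal its own; its per-bit cost is $|S|$. $\gamma(G)$ is the domination number and $\gamma_f(G)$ the fractional domination number (minimum of $\sum_v x(v)$ over $x\ge0$ with $\sum_{u\in N[v]}x(u)\ge1$ for all $v$, $N[v]$ the closed neighbourhood). *)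

(* Defs.v *)
From HB Require Import structures.
From mathcomp Require Import all_boot all_order all_algebra.
From mathcomp Require Import all_classical all_reals all_analysis.
Set Implicit Arguments. Unset Strict Implicit. Unset Printing Implicit Defensive.
Import Order.TTheory GRing.Theory Num.Theory.
Local Open Scope ring_scope.

Definition simple_graph (V : finType) (e : rel V) : Prop :=
  symmetric e /\ irreflexive e.

Definition connected_graph (V : finType) (e : rel V) : Prop :=
  forall u v : V, connect e u v.

Definition cnbr (V : finType) (e : rel V) (v u : V) : bool := (u == v) || e v u.

Definition dominating (V : finType) (e : rel V) (D : {set V}) : bool :=
  [forall v, [exists u in D, cnbr e v u]].

Definition domination_number (V : finType) (e : rel V) : nat :=
  #|[arg min_(D < [set: V] | dominating e D) #|D|]|.

Definition frac_dominating (R : realType) (V : finType) (e : rel V) (x : V -> R) : Prop :=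
  (forall v, 0 <= x v) /\ (forall v, 1 <= \sum_(u | cnbr e v u) x u).

Definition frac_domination_number (R : realType) (V : finType) (e : rel V) : R :=
  inf [set s : R | exists x : V -> R, frac_dominating e x /\ s = \sum_v x v].

(* ---------- Deterministic static protocols in the local broadcast model ----------
   schedule : the (static) sequence of broadcasts (sender, message length);
   message t x view : contents of the t-th broadcast, computed by the sender from its
                      input x and its view (all messages broadcast so far in its
                      closed neighbourhood, in order);
   decision v x view : final accept (true) / reject of vertex v. *)
Record protocol (V : finType) (k : nat) := Protocol {
  schedule : seq (V * nat);
  message : nat -> k.-tuple bool -> seq bitseq -> bitseq;
  decision : V -> k.-tuple bool -> seq bitseq -> bool }.

Definition resize (l : nat) (m : bitseq) : bitseq := take l (m ++ nseq l false).

Fixpoint exec_from (V : finType) (e : rel V) (k : nat) (P : protocol V k)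
    (lam : V -> k.-tuple bool) (sch : seq (V * nat)) (t : nat)
    (tr : seq (V * bitseq)) : seq (V * bitseq) :=
  match sch with
  | [::] => tr
  | (s, l) :: sch' =>
      let view := [seq p.2 | p <- tr & cnbr e s p.1] in
      exec_from e P lam sch' t.+1 (rcons tr (s, resize l (message P t (lam s) view)))
  end.

Definition transcript (V : finType) (e : rel V) (k : nat) (P : protocol V k)
    (lam : V -> k.-tuple bool) : seq (V * bitseq) :=
  exec_from e P lam (schedule P) 0 [::].

Definition view_of (V : finType) (e : rel V) (k : nat) (P : protocol V k)
    (lam : V -> k.-tuple bool) (v : V) : seq bitseq :=
  [seq p.2 | p <- transcript e P lam & cnbr e v p.1].

Definition accepts (V : finType) (e : rel V) (k : nat) (P : protocol V k)
    (lam : V -> k.-tuple bool) (v : V) : bool :=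
  decision P v (lam v) (view_of e P lam v).

Definition solves (V : finType) (e : rel V) (k : nat) (P : protocol V k) : Prop :=
  forall lam : V -> k.-tuple bool,
    ((forall u v, lam u = lam v) -> forall v, accepts e P lam v) /\
    ((exists u v, lam u <> lam v) -> exists v, ~~ accepts e P lam v).

Definition cost (V : finType) (k : nat) (P : protocol V k) : nat :=
  sumn [seq p.2 | p <- schedule P].

Definition is_opt (V : finType) (e : rel V) (k : nat) (c : nat) : Prop :=
  (exists P : protocol V k, solves e P /\ cost P = c) /\
  (forall P : protocol V k, solves e P -> (c <= cost P)%N).

Definition simple_protocol (V : finType) (k : nat) (S : {set V}) : protocol V k :=
  @Protocol V k [seq (v, k) | v <- enum S]
    (fun _ x _ => val x)
    (fun _ x view => all (fun m => m == val x) view).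

(* Main.v *)
Require Import Defs.
From HB Require Import structures.
From mathcomp Require Import all_boot all_order all_algebra.
From mathcomp Require Import all_classical all_reals all_analysis.
Import Order.TTheory GRing.Theory Num.Theory numFieldNormedType.Exports.
Local Open Scope classical_set_scope.
Local Open Scope ring_scope.
Set Implicit Arguments. Unset Strict Implicit. Unset Printing Implicit Defensive.
Local Close Scope classical_set_scope.
Section Exec.
Variables (V : finType) (e : rel V) (k : nat) (P : protocol V k).

Lemma size_resize l m : size (resize l m) = l.
Proof. by rewrite /resize size_take size_cat size_nseq; apply/minn_idPl; rewrite leq_addl. Qed.

Lemma exec_cat lam sch t tr : exists rest, exec_from e P lam sch t tr = tr ++ rest.
Proof.
elim: sch t tr => [|[s l] sch IH] t tr /=; first by exists [::]; rewrite cats0.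
have [rest ->] := IH t.+1 (rcons tr (s, resize l (message P t (lam s)
   [seq p.2 | p <- tr & cnbr e s p.1]))).
by eexists; rewrite cat_rcons.
Qed.

Lemma exec_shape lam sch t tr :
  [seq (p.1, size p.2) | p <- exec_from e P lam sch t tr] =
  [seq (p.1, size p.2) | p <- tr] ++ sch.
Proof.
elim: sch t tr => [|[s l] sch IH] t tr /=; first by rewrite cats0.
by rewrite IH map_rcons /= size_resize cat_rcons.
Qed.

Lemma transcript_shape lam :
  [seq (p.1, size p.2) | p <- transcript e P lam] = schedule P.
Proof. by rewrite /transcript exec_shape. Qed.

Lemma view_shape lam v :
  shape (view_of e P lam v) = [seq p.2 | p <- schedule P & cnbr e v p.1].
Proof.
rewrite /view_of /shape -(transcript_shape lam).
elim: (transcript e P lam) => //= [[a b] s IH] /=.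
by case: (cnbr e v a) => //=; rewrite IH.
Qed.

End Exec.
Lemma cancel_cat (T : Type) (s a b : seq T) : s ++ a = s ++ b -> a = b.
Proof. by elim: s => //= x s IH [] /IH. Qed.

Section Fool.
Variables (V : finType) (e : rel V) (k : nat) (P : protocol V k).
Variables (v : V) (x y : k.-tuple bool) (lamM : V -> k.-tuple bool).
Hypothesis lamMv : lamM v = x.
Hypothesis lamMo : forall w, w != v -> lamM w = y.

Lemma fool_exec sch t trX trY :
  [seq p <- trX | cnbr e v p.1] = [seq p <- trY | cnbr e v p.1] ->
  [seq p <- exec_from e P (fun _ => x) sch t trX | cnbr e v p.1] =
  [seq p <- exec_from e P (fun _ => y) sch t trY | cnbr e v p.1] ->
  exec_from e P lamM sch t trY = exec_from e P (fun _ => y) sch t trY.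
Proof.
elim: sch t trX trY => [|[s l] sch IH] t trX trY //= H1 H2.
set newX := (s, resize l (message P t x [seq p.2 | p <- trX & cnbr e s p.1])) in H2 *.
set newY := (s, resize l (message P t y [seq p.2 | p <- trY & cnbr e s p.1])) in H2 *.
have key : cnbr e v s -> newX = newY.
  move=> cs.
  have [rX eX] := exec_cat e P (fun _ => x) sch t.+1 (rcons trX newX).
  have [rY eY] := exec_cat e P (fun _ => y) sch t.+1 (rcons trY newY).
  move: H2; rewrite eX eY !filter_cat !filter_rcons /= cs H1 -!cats1 -!catA.
  by move/cancel_cat/(congr1 (head newX)).
have H1' : [seq p <- rcons trX newX | cnbr e v p.1] = [seq p <- rcons trY newY | cnbr e v p.1].
  rewrite !filter_rcons /=; case cs: (cnbr e v s) => //.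
  by rewrite H1 key.
have -> : (s, resize l (message P t (lamM s) [seq p.2 | p <- trY & cnbr e s p.1])) = newY.
  have [/eqP sv | sv] := boolP (s == v).
    have cs : cnbr e v s by rewrite /cnbr sv eqxx.
    rewrite -key // /newX sv lamMv.
    by rewrite H1.
  by rewrite lamMo.
exact: (IH _ _ _ H1' H2).
Qed.

End Fool.
Lemma filter_pairs (A B : Type) (Q : pred A) (s1 s2 : seq (A * B)) :
  [seq p.1 | p <- s1] = [seq p.1 | p <- s2] ->
  [seq p.2 | p <- s1 & Q p.1] = [seq p.2 | p <- s2 & Q p.1] ->
  [seq p <- s1 | Q p.1] = [seq p <- s2 | Q p.1].
Proof.
elim: s1 s2 => [|[a b] s1 IH] [|[a' b'] s2] //= [<- /IH {}IH].
by case: (Q a) => //= -[<- /IH ->].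
Qed.

Section Lower.
Variables (V : finType) (e : rel V) (k : nat) (P : protocol V k).
Hypothesis HP : solves e P.
Hypothesis HV : (2 <= #|V|)%N.

Lemma view_inj v : injective (fun x : k.-tuple bool => view_of e P (fun _ => x) v).
Proof.
move=> x y Hxy; apply/eqP/negPn/negP => nxy.
pose lamM := fun w => if w == v then x else y.
have fst_eq (lam lam' : V -> k.-tuple bool) :
    [seq p.1 | p <- transcript e P lam] = [seq p.1 | p <- transcript e P lam'].
  have := congr1 (map fst) (transcript_shape e P lam).
  have := congr1 (map fst) (transcript_shape e P lam').
  by rewrite -!map_comp /= => -> ->.
have Hf := filter_pairs (fst_eq (fun _ => x) (fun _ => y)) Hxy.
have Htr : transcript e P lamM = transcript e P (fun _ => y).
  apply: (@fool_exec V e k P v x y) => //.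
  - by rewrite /lamM eqxx.
  - by move=> w /negPf; rewrite /lamM => ->.
have [w wv] : exists w, w != v.
  have : (1 < #|V|)%N by [].
  rewrite (cardD1 v) ltnS => /card_gt0P [w]; rewrite !inE => /andP[wv _].
  by exists w.
have [_ H2] := HP lamM.
have nc : exists u v, lamM u <> lamM v.
  by exists v, w; rewrite /lamM eqxx (negPf wv) => E; move: nxy; rewrite E eqxx.
have [u] := H2 nc; apply/negP; rewrite negbK.
have [H1Y _] := HP (fun _ => y).
have [H1X _] := HP (fun _ => x).
rewrite /accepts /view_of Htr -/(view_of e P (fun _ => y) u).
have [/eqP -> | uv] := boolP (u == v).
  by rewrite /lamM eqxx -Hxy; apply: H1X.
by rewrite /lamM (negPf uv); apply: H1Y.
Qed.

Lemma bits_lower v : (k <= sumn [seq p.2 | p <- schedule P & cnbr e v p.1])%N.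
Proof.
set c := sumn _.
have sz x : size (flatten (view_of e P (fun _ => x) v)) == c.
  by rewrite size_flatten view_shape.
pose f (x : k.-tuple bool) : c.-tuple bool := Tuple (sz x).
have finj : injective f.
  move=> x y /(congr1 val) /= H.
  apply: (@view_inj v).
  by rewrite /= -[LHS]flattenK -[RHS]flattenK H !view_shape.
have := leq_card f finj; rewrite !card_tuple card_bool.
by rewrite leq_exp2l.
Qed.

End Lower.
Section Simple.
Variables (V : finType) (e : rel V).
Hypothesis esym : symmetric e.

Lemma cnbrC x y : cnbr e x y = cnbr e y x.
Proof. by rewrite /cnbr eq_sym esym. Qed.

Definition rS (S : {set V}) : rel V :=
  fun x y => ((x \in S) && cnbr e x y) || ((y \in S) && cnbr e y x).

Lemma rS_sym (S : {set V}) : symmetric (rS S).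
Proof. by move=> x y; rewrite /rS orbC. Qed.

Lemma rS_mono (S S' : {set V}) x y : S \subset S' -> connect (rS S) x y -> connect (rS S') x y.
Proof.
move=> sub; apply: connect_sub => a b /orP[/andP[aS ab]|/andP[bS ba]]; apply: connect1.
  by rewrite /rS (fintype.subsetP sub _ aS) ab.
by rewrite /rS (fintype.subsetP sub _ bS) ba orbT.
Qed.

Lemma exec_simple k S (lam : V -> k.-tuple bool) s t tr :
  exec_from e (simple_protocol k S) lam [seq (v, k) | v <- s] t tr =
  tr ++ [seq (v, val (lam v)) | v <- s].
Proof.
elim: s t tr => [|a s IH] t tr /=; first by rewrite cats0.
rewrite IH cat_rcons; congr (_ ++ (_, _) :: _).
by rewrite /resize take_size_cat // size_tuple.
Qed.

Lemma view_simple k S (lam : V -> k.-tuple bool) v :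
  view_of e (simple_protocol k S) lam v = [seq val (lam u) | u <- enum S & cnbr e v u].
Proof.
rewrite /view_of /transcript exec_simple /=.
elim: (enum S) => //= a s IH; by case: (cnbr e v a) => //=; rewrite IH.
Qed.

Lemma simple_solves k (S : {set V}) : (forall u w, connect (rS S) u w) -> solves e (simple_protocol k S).
Proof.
move=> Hc lam; split.
  move=> Heq v; rewrite /accepts view_simple /=.
  by apply/allP => m /mapP [u _ ->]; rewrite (Heq u v).
move=> [u0 [w0 neq]].
case: (boolP [forall v, accepts e (simple_protocol k S) lam v]); last first.
  by move/forallPn.
move/forallP => Hacc; exfalso; apply: neq.
have st u w : u \in S -> cnbr e w u -> lam w = lam u.
  move=> uS wu; have := Hacc w; rewrite /accepts view_simple /= => /allP H.
  have : val (lam u) \in [seq val (lam u) | u <- enum S & cnbr e w u].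
    by apply: map_f; rewrite mem_filter wu mem_enum.
  by move/H/eqP/val_inj.
have er x y : rS S x y -> lam x = lam y.
  case/orP => /andP[xS xy].
    by symmetry; apply: st; rewrite // cnbrC.
  by apply: st; rewrite // cnbrC.
have ec x y : connect (rS S) x y -> lam x = lam y.
  move/connectP => [p pth ->]; elim: p x pth => //= a p IH x /andP[ra pa].
  by rewrite (er _ _ ra) IH.
exact: ec.
Qed.

End Simple.
Section Build.
Variables (V : finType) (e : rel V).
Hypothesis esym : symmetric e.
Hypothesis econn : connected_graph e.

Lemma cross_edge (A : {set V}) a b :
  a \in A -> b \notin A -> connect e a b -> exists x y, [/\ x \in A, y \notin A & e x y].
Proof.
move=> aA bA /connectP [p pth def_b]; elim: p a aA pth def_b => /= [|c p IH] a aA.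
  by move=> _ ba; move: bA; rewrite ba aA.
case/andP => ac pth lb; have [cA|cA] := boolP (c \in A).
  exact: IH cA pth lb.
by exists a, c.
Qed.

Variables (D : {set V}) (d0 : V).
Hypothesis d0D : d0 \in D.
Hypothesis Ddom : dominating e D.

Definition Cset (T : {set V}) : {set V} := [set w | connect (rS e (D :|: T)) d0 w]%SET.

Lemma build n : exists T : {set V}, (#|T| <= n)%N /\
  (Cset T = [set: V] \/ (n.+1 <= #|D :&: Cset T|)%N).
Proof.
elim: n => [|n [T [cT H]]].
  exists finset.set0; split; rewrite ?cards0 //; right.
  by rewrite card_gt0; apply/set0Pn; exists d0; rewrite !inE d0D connect0.
case: H => [H|H]; first by exists T; split => //; [apply: leqW | left].
have [Cfull|] := eqVneq (Cset T) [set: V]; first by exists T; split => //; [apply: leqW | left].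
rewrite finset.eqEsubset finset.subsetT /= => /subsetPn [y0 _ y0C].
have d0C : d0 \in Cset T by rewrite inE connect0.
have [x [y [xC yC xy]]] := cross_edge d0C y0C (econn d0 y0).
have /existsP [d /andP [dD yd]] := forallP Ddom y.
have dC : d \notin Cset T.
  apply: contra yC; rewrite !inE => c0d; apply: connect_trans c0d _.
  by apply: connect1; rewrite /rS inE dD /= cnbrC // yd.
exists (x |: T); split.
  by rewrite cardsU1 (leq_add (leq_b1 _) cT).
right.
have sub : D :|: T \subset D :|: (x |: T).
  by apply/fintype.subsetP => z; rewrite !inE => /orP[->|->]; rewrite ?orbT.
have CC : Cset T \subset Cset (x |: T).
  by apply/fintype.subsetP => z; rewrite !inE; apply: rS_mono.
have xC' : connect (rS e (D :|: (x |: T))) d0 x.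
  by move: xC; rewrite inE; apply: rS_mono.
have yC' : connect (rS e (D :|: (x |: T))) d0 y.
  apply: connect_trans xC' (connect1 _).
  by rewrite /rS !inE eqxx orbT /= /cnbr xy orbT.
have dC' : d \in Cset (x |: T).
  rewrite inE; apply: connect_trans yC' (connect1 _).
  by rewrite /rS [d \in _]inE dD /= [cnbr e d y]cnbrC // yd orbT.
have : d |: (D :&: Cset T) \subset D :&: Cset (x |: T).
  apply/fintype.subsetP => z; rewrite !inE => /orP[/eqP ->|/andP[zD zC]].
    by rewrite dD /=; move: dC'; rewrite inE.
  by rewrite zD /=; have := fintype.subsetP CC z; rewrite !inE; apply.
move/subset_leq_card; apply: leq_trans.
by rewrite cardsU1 inE negb_and dC orbT add1n ltnS.
Qed.

End Build.
Lemma good_set (V : finType) (e : rel V) :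
  simple_graph e -> connected_graph e -> (2 <= #|V|)%N ->
  exists S : {set V}, (forall k, solves e (simple_protocol k S)) /\
     (#|S| <= 2 * domination_number e)%N.
Proof.
move=> [esym eirr] econn HV.
have domT : dominating e [set: V].
  by apply/forallP => v; apply/existsP; exists v; rewrite inE /cnbr eqxx.
rewrite /domination_number.
case: (arg_minnP (fun D : {set V} => #|D|) domT) => D Ddom _.
have [v0 _] : exists v : V, true.
  have : (0 < #|V|)%N by apply: leq_trans HV.
  by case/card_gt0P => v _; exists v.
have /existsP [d0 /andP [d0D _]] := forallP Ddom v0.
have [T [cT [Hf|Hc]]] := build esym econn d0D Ddom #|D|; last first.
  have := subset_leq_card (subsetIl D (Cset e D d0 T)).
  by rewrite leqNgt (leq_trans _ Hc).
exists (D :|: T); split.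
  move=> k; apply: simple_solves => // u w.
  have cu : connect (rS e (D :|: T)) d0 u by have := finset.in_setT u; rewrite -Hf inE.
  have cw : connect (rS e (D :|: T)) d0 w by have := finset.in_setT w; rewrite -Hf inE.
  apply: connect_trans cw; rewrite (sym_connect_sym (rS_sym e (D :|: T))) //.
apply: leq_trans (leq_card_setU D T).1 _.
by rewrite mul2n -addnn leq_add2l.
Qed.
Lemma sum_bits (V : finType) (Q : pred V) (s : seq (V * nat)) :
  (\sum_(u | Q u) sumn [seq p.2 | p <- s & p.1 == u] = sumn [seq p.2 | p <- s & Q p.1])%N.
Proof.
elim: s => [|[a l] s IH]; first by rewrite big1.
have E u : sumn [seq p.2 | p <- (a, l) :: s & p.1 == u] =
    ((a == u) * l + sumn [seq p.2 | p <- s & p.1 == u])%N.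
  by rewrite /=; case: (a == u); rewrite ?mul1n ?mul0n.
rewrite (eq_bigr _ (fun u _ => E u)) big_split /= IH.
case Qa: (Q a) => /=; last first.
  rewrite big1 // => u Qu; case: eqP => // au; by move: Qa; rewrite au Qu.
rewrite (bigD1 a) //= eqxx mul1n big1 ?addn0 // => u /andP[_ ua].
by rewrite eq_sym (negPf ua).
Qed.

Section Real.
Variable R : realType.
Variables (V : finType) (e : rel V).

Lemma gf_upper k (P : protocol V k) : (0 < k)%N -> solves e P -> (2 <= #|V|)%N ->
  frac_domination_number R e <= (cost P)%:R / k%:R.
Proof.
move=> k0 HP HV.
pose bits u := sumn [seq p.2 | p <- schedule P & p.1 == u].
pose x := fun u => (bits u)%:R / k%:R : R.
have k0R : (0 : R) < k%:R by rewrite ltr0n.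
apply: ge_inf.
  exists 0 => s [y [[y0 _] ->]]; exact: sumr_ge0.
exists x; split.
  split; first by move=> u; rewrite /x divr_ge0 // ler0n.
  move=> v; rewrite -mulr_suml -natr_sum sum_bits ler_pdivlMr // mul1r ler_nat.
  exact: bits_lower.
rewrite -mulr_suml -natr_sum sum_bits /cost.
by rewrite (eq_filter (a2 := predT)) // filter_predT.
Qed.

Lemma gf_ge1 : (0 < #|V|)%N -> 1 <= frac_domination_number R e.
Proof.
move=> V0; have [v0 _] := card_gt0P V0.
apply: lb_le_inf.
  exists (\sum_(v : V) (1 : R)), (fun _ => 1); split => //; split => // v.
  by rewrite (bigD1 v) /= ?/cnbr ?eqxx // lerDl sumr_ge0.
move=> s [y [[y0 y1] ->]].
apply: le_trans (y1 v0) _.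
rewrite [X in _ <= X](bigID (cnbr e v0)) /= lerDl sumr_ge0 //.
Qed.

End Real.
Local Open Scope classical_set_scope.

Theorem corollary3p3 (R : realType) (V : finType) (e : rel V) :
  simple_graph e -> connected_graph e -> (2 <= #|V|)%N ->
  exists S : {set V},
    (forall k : nat, solves e (simple_protocol k S)) /\
    (forall (o : nat -> nat) (L : R),
       (forall k : nat, is_opt e k (o k)) ->
       ((fun k : nat => (o k)%:R / k%:R : R) @ \oo --> L) ->
       (#|S|%:R : R) <= 2 * ((domination_number e)%:R / frac_domination_number R e) * L).
Proof.
move=> Hs Hc HV.
have [S [Hsolve Hcard]] := good_set Hs Hc HV.
exists S; split => // o L Ho HL.
set gf := frac_domination_number R e.
have gf1 : 1 <= gf by apply: gf_ge1; apply: leq_trans HV.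
have gf0 : 0 < gf by apply: lt_le_trans gf1.
have gfL : gf <= L.
  have := @closed_cvg nat R _ _ (fun k : nat => (o k)%:R / k%:R : R) [set x | gf <= x] (@closed_ge R gf).
  move=> /(_ _ _ _ L HL); apply.
  exists 1%N => // k /= k1.
  have [[P [HP <-]] _] := Ho k.
  exact: gf_upper.
have L1 : 1 <= L / gf by rewrite ler_pdivlMr // mul1r.
set g := (domination_number e)%:R : R.
apply: (@le_trans _ _ (2 * g)).
  by rewrite /g -natrM ler_nat.
have -> : 2 * (g / gf) * L = 2 * g * (L / gf).
  by rewrite mulrA -!mulrA; congr (_ * (_ * _)); rewrite mulrC.
apply: ler_peMr => //.
by rewrite mulr_ge0 // ler0n.
Qed.
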